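(* Let $T\colon\mathscr C\to\mathscr C$ be a homeomorphism of the Cantor set with exactly one fixed point $x^0$ such that for every $x\ne x^0$ and every $m\in\mathbb N$ the set $\{T^{mk}(x):k\in\mathbb Z\}$ is dense in $\mathscr C$. Let $\mathscr C=A\sqcup B$ be a partition into clopen sets with $x^0\in A$. Let $\hat X=A\times\{0,1\}\sqcup B\times\{0\}$ and define $f\colon\hat X\to\hat X$ by $f(x,i)=(T(x),1)$ if $i=0$ and $T(x)\in A$, and $f(x,i)=(T(x),0)$ otherwise. For $x\in\mathscr C$ let $N(x,B)=\min\{k\in\mathbb N_0: T^{-k}(x)\in B\}$ (with $N(x,B)=\infty$ if no such $k$ exists), let $U=\{x\in\mathscr C: N(x,B)<\infty\}$, let $X=\overline{\{(x,N(x,B)\bmod 2):x\in U\}}$ (closure in $\hat X$), and let $\pi\colon\hat X\to\mathscr C$ be $\pi(x,i)=x$. Then $f(X)=X$, and for every $(x,i)\in X\setminus\pi^{-1}(x^0)$, every $m\in\mathbb N$, and every full orbit $(y_k)_{k\in\mathbb Z}$ of $(x,i)$ in $X$ (i.e. $y_k\in X$, $y_0=(x,i)$, $f(y_k)=y_{k+1}$ for all $k$), we have $\overline{\{y_{mk}:k\in\mathbb Z\}}=X$.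
   Context: $\mathscr C$ denotes the Cantor set; $\mathbb N_0=\{0,1,2,\dots\}$. *)

(* Defs.v *)
From HB Require Import structures.
From mathcomp Require Import all_boot all_order all_algebra.
From mathcomp Require Import all_classical all_reals all_analysis.
Set Implicit Arguments. Unset Strict Implicit. Unset Printing Implicit Defensive.
Import Order.TTheory GRing.Theory Num.Theory.
Local Open Scope classical_set_scope.

Definition iterz {X : Type} (T Tinv : X -> X) (n : int) (x : X) : X :=
  match n with
  | Posz k => iter k T x
  | Negz k => iter k.+1 Tinv x
  end.

(* The map f on hat X (defined on all of C x bool; hat X is invariant):
   f(x,i) = (T x, 1) if i = 0 and T x \in A, (T x, 0) otherwise. *)
Definition fhat {X : Type} (T : X -> X) (A : set X) (p : X * bool) : X * bool :=
  (T p.1, ~~ p.2 && `[< A (T p.1) >]).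

Definition graphN {X : Type} (Tinv : X -> X) (B : set X) : set (X * bool) :=
  [set p | exists k : nat, B (iter k Tinv p.1) /\
                          (forall j, (j < k)%N -> ~ B (iter j Tinv p.1)) /\
                          p.2 = odd k].

(* Main.v *)
Require Import Defs.
From HB Require Import structures.
From mathcomp Require Import all_boot all_order all_algebra.
From mathcomp Require Import all_classical all_reals all_analysis.
From mathcomp Require Import finmap zify.
Import Order.TTheory GRing.Theory Num.Theory.
Local Open Scope classical_set_scope.

Lemma iter_cont (f : cantor_space -> cantor_space) n :
  continuous f -> continuous (iter n f).
Proof.
move=> hf; elim: n => [|n IH] x /=; first exact: cvg_id.
change (continuous (f \o iter n f)) with (forall x, (f \o iter n f) @ x --> (f \o iter n f) x).
exact: (continuous_comp (IH x) (hf _)).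
Qed.

Lemma iter_open (f : cantor_space -> cantor_space) n U :
  continuous f -> open U -> open (iter n f @^-1` U).
Proof. by move=> hf; move/continuousP: (iter_cont f n hf); apply. Qed.

Lemma iter_closed (f : cantor_space -> cantor_space) n U :
  continuous f -> closed U -> closed (iter n f @^-1` U).
Proof.
move=> hf cU; rewrite -openC.
have -> : ~` (iter n f @^-1` U) = iter n f @^-1` (~` U) by [].
by apply: iter_open => //; rewrite openC.
Qed.

Lemma iterK1 (g h : cantor_space -> cantor_space) : cancel g h ->
  forall a x, iter a h (iter a g x) = x.
Proof.
move=> gK; elim=> [|a IH] x //.
by rewrite [iter a.+1 h _]iterSr iterS gK IH.
Qed.

Lemma iterK3 (g h : cantor_space -> cantor_space) : cancel g h ->
  forall a b x, (a <= b)%N -> iter a h (iter b g x) = iter (b - a) g x.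
Proof.
move=> gK a b x hab; rewrite -{1}(subnKC hab) iterD.
by rewrite (iterK1 _ _ gK).
Qed.

Lemma iterzN (T Tinv : cantor_space -> cantor_space) k x :
  iterz T Tinv (- (k%:Z))%R x = iter k Tinv x.
Proof. by case: k => [|k] //; rewrite -NegzE. Qed.

Lemma clopen_seq (f : cantor_space -> set cantor_space) (s : seq cantor_space) :
  (forall y, clopen (f y)) -> clopen [set v | forall y, y \in s -> f y v].
Proof.
move=> hf; elim: s => [|a s IH].
  have -> : [set v | forall y, y \in [::] -> f y v] = setT.
    by apply/seteqP; split => // v _ y.
  exact: clopenT.
have -> : [set v | forall y, y \in a :: s -> f y v] =
  f a `&` [set v | forall y, y \in s -> f y v].
  apply/seteqP; split => v /=.
    by move=> h; split; [apply: h; rewrite inE eqxx | move=> y ys; apply: h; rewrite inE ys orbT].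
  by move=> [fa h] y; rewrite inE => /orP [/eqP -> // | /h].
exact: clopenI.
Qed.

Lemma clopen_nbhs (u : cantor_space) (P : set cantor_space) :
  nbhs u P -> exists V, [/\ clopen V, V u & V `<=` P].
Proof.
move=> nP.
have hU : forall y, exists U : set cantor_space, [/\ clopen U, U u & (P° y \/ ~ U y)].
  move=> y; case: (pselect (P° y)) => hy.
    by exists setT; split => //; [exact: clopenT | left].
  have uy : u != y by apply/eqP => uy; apply: hy; rewrite -uy.
  have [U [cU Uu nUy]] := cantor_zero_dimensional uy.
  by exists U; split => //; right.
have [f hf] := choice hU.
have cov : [set: cantor_space] `<=` cover [set: cantor_space] (fun y => P° `|` ~` f y).
  by move=> y _; exists y => //; case: (hf y) => _ _ [h|h]; [left|right].
have opn : forall y, [set: cantor_space] y -> open (P° `|` ~` f y).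
  move=> y _; apply: openU; first exact: open_interior.
  by case: (hf y) => -[_ cl] _ _; rewrite openC.
have := cantor_space_compact; rewrite compact_cover => /(_ _ _ _ opn cov) [D' _ hD'].
exists [set v : cantor_space | forall y : cantor_space, y \in D' -> f y v]; split.
- by apply: clopen_seq => y; case: (hf y).
- by move=> y _; case: (hf y).
- move=> v Vv; have [y yD [h|h]] := hD' v I; first exact: interior_subset.
  by exfalso; apply: h; apply: Vv.
Qed.

Lemma nest (g ginv : cantor_space -> cantor_space) : cancel g ginv -> continuous ginv ->
  forall Q q0, closed Q -> Q q0 -> (forall w, Q w -> Q (g w)) ->
  exists q, forall n, Q (iter n ginv q).
Proof.
move=> gK hc Q q0 cQ Qq0 inv.
apply: contrapT => /forallNP hn.
have cov : [set: cantor_space] `<=` cover [set: nat] (fun n => iter n ginv @^-1` (~` Q)).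
  by move=> q _; have /existsNP [n hq] := hn q; exists n.
have opn : forall n, [set: nat] n -> open (iter n ginv @^-1` (~` Q)).
  by move=> n _; apply: iter_open => //; rewrite openC.
have := cantor_space_compact; rewrite compact_cover => /(_ _ _ _ opn cov) [D' _ hD'].
set N := \max_(i <- D') i.
have fwd : forall n q, Q q -> Q (iter n g q).
  by elim => //= n IH q Qq; apply: inv; apply: IH.
have [n nD hn'] := hD' (iter N g q0) I.
apply: hn'; rewrite /= (iterK3 _ _ gK); first exact: fwd.
exact: leq_bigmax_seq.
Qed.

Lemma bounded_ret (h : cantor_space -> cantor_space) (V : set cantor_space) :
  continuous h -> clopen V ->
  (forall v, V v -> exists k, (0 < k)%N /\ V (iter k h v)) ->
  exists R, forall v, V v -> exists k, [/\ (0 < k)%N, (k <= R)%N & V (iter k h v)].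
Proof.
move=> hc cV hret.
have cpV : compact V := subclosed_compact cV.2 cantor_space_compact (@subsetT _ V).
have cov : V `<=` cover [set k | (0 < k)%N] (fun n => iter n h @^-1` V).
  by move=> v Vv; have [k [k0 hk]] := hret v Vv; exists k.
have opn : forall n, [set k | (0 < k)%N] n -> open (iter n h @^-1` V).
  by move=> n _; apply: iter_open => //; exact: cV.1.
move: cpV; rewrite compact_cover => /(_ _ _ _ opn cov) [D' sD hD'].
exists (\max_(i <- D') i) => v Vv.
have [n nD hn] := hD' v Vv.
exists n; split => //; last exact: leq_bigmax_seq.
by move/sD: nD; rewrite in_setE.
Qed.

Lemma clopen_iterU (h : cantor_space -> cantor_space) (V : set cantor_space) n :
  continuous h -> clopen V -> clopen [set w | exists k, (k < n)%N /\ V (iter k h w)].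
Proof.
move=> hc cV; elim: n => [|n IH].
  have -> : [set w | exists k, (k < 0)%N /\ V (iter k h w)] = set0.
    by apply/seteqP; split => // w [k []].
  exact: clopen0.
have -> : [set w | exists k, (k < n.+1)%N /\ V (iter k h w)] =
   [set w | exists k, (k < n)%N /\ V (iter k h w)] `|` (iter n h @^-1` V).
  apply/seteqP; split => w /=.
    move=> [k []]; rewrite ltnS leq_eqVlt => /orP [/eqP -> |kn] hk; first by right.
    by left; exists k.
  by case=> [[k [kn hk]]|hn]; [exists k; split => //; exact: ltnW | exists n].
apply: clopenU => //; split; [exact: iter_open cV.1 | exact: iter_closed cV.2].
Qed.

Section S.
Variables (T Tinv : cantor_space -> cantor_space)
  (hTK : cancel T Tinv) (hTinvK : cancel Tinv T)
  (hT : continuous T) (hTinv : continuous Tinv)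
  (x0 : cantor_space)
  (hfix : T x0 = x0)
  (hmin : forall x, x <> x0 -> forall m : nat, (0 < m)%N ->
          closure [set iterz T Tinv (m%:Z * k)%R x | k in [set: int]] = [set: cantor_space])
  (A B : set cantor_space)
  (hA : clopen A) (hB : clopen B)
  (hAB : A `&` B = set0) (hAUB : A `|` B = [set: cantor_space])
  (hx0 : A x0).

Lemma orbit x : x <> x0 -> forall m, (0 < m)%N -> forall U u, open U -> U u ->
  exists n, U (iter (m * n) T x) \/ U (iter (m * n) Tinv x).
Proof.
move=> hx m hm U u oU Uu.
have : closure [set iterz T Tinv (m%:Z * k)%R x | k in [set: int]] u by rewrite hmin.
move=> /(_ U (open_nbhs_nbhs (conj oU Uu))) [_ [[k _ <-] Uk]].
case: k Uk => n Uk.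
  by exists n; left; rewrite -PoszM in Uk.
exists n.+1; right; move: Uk; rewrite NegzE mulrN -PoszM iterzN //.
Qed.

Lemma notAB {w} : A w -> B w -> False.
Proof. by move=> a b; have : (A `&` B) w by []; rewrite hAB. Qed.

Lemma AorB w : A w \/ B w.
Proof. by have : (A `|` B) w by rewrite hAUB. Qed.

Lemma Tinvx0 : Tinv x0 = x0.
Proof. by rewrite -{1}hfix hTK. Qed.

Definition Sn n := [set w | B (iter n Tinv w) /\ forall j, (j < n)%N -> ~ B (iter j Tinv w)].

Lemma Sn_open n : open (Sn n).
Proof.
have h : forall n, open [set w | forall j, (j < n)%N -> ~ B (iter j Tinv w)].
  elim=> [|k IH].
    have -> : [set w | forall j, (j < 0)%N -> ~ B (iter j Tinv w)] = setT.
      by apply/seteqP; split => // w _ j.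
    exact: openT.
  have -> : [set w | forall j, (j < k.+1)%N -> ~ B (iter j Tinv w)] =
     [set w | forall j, (j < k)%N -> ~ B (iter j Tinv w)] `&` (iter k Tinv @^-1` (~` B)).
    apply/seteqP; split => w /=.
      by move=> H; split => [j jk|]; apply: H => //; exact: ltnW.
    move=> [H nB] j; rewrite ltnS leq_eqVlt => /orP [/eqP -> //| /H //].
  apply: openI => //; apply: iter_open => //; rewrite openC; exact: hB.2.
have -> : Sn n = (iter n Tinv @^-1` B) `&` [set w | forall j, (j < n)%N -> ~ B (iter j Tinv w)] by [].
apply: openI => //; apply: iter_open => //; exact: hB.1.
Qed.

Lemma Sn_uniq n k w : Sn n w -> B (iter k Tinv w) -> (forall j, (j < k)%N -> ~ B (iter j Tinv w)) -> k = n.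
Proof.
move=> [Bn nn] Bk nk; apply/eqP; rewrite eqn_leq; apply/andP; split; rewrite leqNgt; apply/negP => h.
- exact: nk _ h Bn.
- exact: nn _ h Bk.
Qed.

Let G := graphN Tinv B.

Lemma sheet n u i V : open V -> V `<=` Sn n -> V u -> closure G (u, i) -> i = odd n.
Proof.
move=> oV VS Vu /(_ (V `*` [set i])) [].
  exists (V, [set i]) => //=; split; first exact: open_nbhs_nbhs.
  exact: discrete_set1.
move=> [w j] [[k [Bk [nk /= ->]]] [Vw /= ji]].
by rewrite -ji (Sn_uniq _ _ _ (VS _ Vw) Bk nk).
Qed.


Lemma part2 (p : cantor_space * bool) : closure G p -> p.1 <> x0 ->
   forall m : nat, (0 < m)%N ->
   forall y : int -> cantor_space * bool,
     (forall k, closure G (y k)) -> y 0%R = p -> (forall k, fhat T A (y k) = y (k + 1)%R) ->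
     closure [set y (m%:Z * k)%R | k in [set: int]] = closure G.
Proof.
move=> Xp px m hm y Xy y0 hy.
have yP : forall n : nat, (y (n%:Z)%R).1 = iter n T p.1.
  elim=> [|n IH]; first by rewrite y0.
  by rewrite -addn1 PoszD -hy addn1 /= IH.
have yN : forall n : nat, (y (- n%:Z)%R).1 = iter n Tinv p.1.
  elim=> [|n IH]; first by rewrite y0.
  have := hy (- (n.+1)%:Z)%R.
  have -> : ((- (n.+1)%:Z + 1)%R = (- n%:Z)%R).
    by rewrite -addn1 PoszD opprD addrNK.
  move=> /(congr1 fst) /= => h.
  by rewrite -IH -h hTK.
apply/seteqP; split.
  apply: (subset_trans _ (@closed_closure _ G)).
  by apply: closureS => _ [k _ <-]; exact: Xy.
apply: (subset_trans _ (@closed_closure _ _)).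
apply: closureS => -[z b] [k [Bk [nk /= bk]]].
move=> Q [[P1 P2] /= [nP1 nP2] sQ].
have oV : open (P1° `&` Sn k) by apply: openI; [exact: open_interior | exact: Sn_open].
have Vz : (P1° `&` Sn k) z by split.
have [n Hn] := orbit _ px _ hm _ _ oV Vz.
have key : forall kk : int, (y kk).1 = (y kk).1 -> (P1° `&` Sn k) (y kk).1 ->
   (P1 `*` P2) (y kk).
  move=> kk _ hV; split; first exact: interior_subset hV.1.
  have -> : (y kk).2 = odd k.
    apply: (@sheet k (y kk).1 (y kk).2 _ oV (fun _ h => h.2) hV).
    by rewrite -surjective_pairing.
  by rewrite -bk; exact: nbhs_singleton nP2.
case: Hn => hV.
  exists (y (m%:Z * n%:Z)%R); split; first by exists (n%:Z)%R.
  by apply: sQ; apply: key => //; rewrite -PoszM yP.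
exists (y (m%:Z * (- n%:Z))%R); split; first by exists (- n%:Z)%R.
by apply: sQ; apply: key => //; rewrite mulrN -PoszM yN.
Qed.


Lemma fhat_graph p : G p -> G (fhat T A p).
Proof.
case: p => w b [k [Bk [nk /= bk]]].
case: (AorB (T w)) => hTw.
  exists k.+1; split; first by rewrite iterSr /= hTK.
  split.
    case=> [_ hb|j]; first exact: notAB hTw hb.
    by rewrite ltnS iterSr /= hTK; exact: nk.
  by rewrite /fhat /= bk (asboolT hTw) andbT.
exists 0%N; split => //; split => // /=.
by rewrite /fhat /= (asboolF (fun h => notAB h hTw)) andbF.
Qed.

Lemma part1a : fhat T A @` closure G `<=` closure G.
Proof.
move=> _ [[z b] Xp <-] Q [[P1 P2] /= [nP1 nP2] sQ].
set E := T @^-1` (P1° `&` (if `[< A (T z) >] then A else B)).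
have oE : open E.
  apply: (continuousP _).1 => //; apply: openI; first exact: open_interior.
  by case: ifP => _; [exact: hA.1 | exact: hB.1].
have Ez : E z.
  split; first exact: nP1.
  case: (AorB (T z)) => h; first by rewrite (asboolT h).
  by rewrite (asboolF (fun h' => notAB h' h)).
have nbE : nbhs (z, b) (E `*` [set b]).
  exists (E, [set b]) => //=; split; first exact: open_nbhs_nbhs.
  exact: discrete_set1.
have [[w j] [Gwj [Ew /= jb]]] := Xp _ nbE.
have hc : `[< A (T w) >] = `[< A (T z) >].
  move: Ew.2; case: ifP => hz hw.
    by rewrite (asboolT hw).
  by rewrite (asboolF (fun h' => notAB h' hw)).
exists (fhat T A (w, j)); split; first exact: fhat_graph.
apply: sQ; rewrite /fhat /= hc jb; split; first exact: interior_subset Ew.1.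
exact: nbhs_singleton nP2.
Qed.


Lemma orbit_closed q Q : q <> x0 -> closed Q -> (forall n, Q (iter n T q)) ->
  (forall n, Q (iter n Tinv q)) -> forall w, Q w.
Proof.
move=> hq cQ h1 h2 w; apply: contrapT => nQ.
have oQ : open (~` Q) by rewrite openC.
have [n [h|h]] := orbit _ hq 1%N isT _ _ oQ nQ; rewrite mul1n in h; apply: h.
  exact: h1.
exact: h2.
Qed.

Lemma noinv Y y1 y2 : clopen Y -> Y y1 -> ~ Y y2 -> (forall w, Y w -> Y (Tinv w)) -> False.
Proof.
move=> cY Y1 nY2 inv.
case: (pselect (Y x0)) => hx.
  have cZ : closed (~` Y) by rewrite closedC; exact: cY.1.
  have invZ : forall w, (~` Y) w -> (~` Y) (T w).
    by move=> w nw hTw; apply: nw; rewrite -(hTK w); exact: inv.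
  have [q hq] := nest _ _ hTK hTinv _ _ cZ nY2 invZ.
  have qx : q <> x0 by move=> e; apply: (hq 0%N); rewrite /= e.
  have fw : forall n, (~` Y) (iter n T q).
    by elim => [|n IH] /=; [exact: (hq 0%N) | exact: invZ].
  exact: (orbit_closed _ _ qx cZ fw hq y1) Y1.
have [q hq] := nest _ _ hTinvK hT _ _ cY.2 Y1 inv.
have qx : q <> x0 by move=> e; apply: hx; rewrite -e; exact: (hq 0%N).
have bw : forall n, Y (iter n Tinv q).
  by elim => [|n IH] /=; [exact: (hq 0%N) | exact: inv].
exact: nY2 (orbit_closed _ _ qx cY.2 hq bw y2).
Qed.

Lemma dens u : u <> x0 -> (exists b0, B b0) -> forall P, nbhs u P ->
  exists w k, P w /\ B (iter k Tinv w).
Proof.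
move=> hu [b0 Bb0] P nP; apply: contrapT => hne.
have H : forall w, P w -> forall k, ~ B (iter k Tinv w).
  by move=> w Pw k Bk; apply: hne; exists w, k.
have [V [cV Vu VP]] := clopen_nbhs _ _ nP.
have fwd : forall w, w <> x0 -> exists M, forall n, V (iter n T w) -> (n < M)%N.
  move=> w hw; have [n [hb|hb]] := orbit _ hw 1%N isT _ _ hB.1 Bb0; rewrite mul1n in hb.
    exists n => n' Vn'; rewrite ltnNge; apply/negP => nn'.
    apply: (H _ (VP _ Vn') (n' - n)).
    by rewrite (iterK3 _ _ hTK _ _ _ (leq_subr _ _)) subKn.
  exists 0%N => n' Vn'; exfalso.
  apply: (H _ (VP _ Vn') (n + n')).
  by rewrite iterD (iterK1 _ _ hTK).
have back : forall v, V v -> exists k, (0 < k)%N /\ V (iter k Tinv v).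
  move=> v Vv; case: (pselect (v = x0)) => [ex|hv].
    by exists 1%N; split => //=; rewrite ex Tinvx0 -ex.
  have [M hM] := fwd v hv.
  have oU : open (V `&` ~` [set v]).
    apply: openI; first exact: cV.1.
    rewrite openC; exact: accessible_closed_set1 (hausdorff_accessible cantor_space_hausdorff) v.
  have [_ lp] := cantor_perfect.
  have : limit_point setT v by rewrite lp.
  move=> /(_ V (open_nbhs_nbhs (conj cV.1 Vv))) [y [yv _ Vy]].
  have Uy : (V `&` ~` [set v]) y by split => //; apply/eqP.
  have [n [hn|hn]] := orbit _ hv M.+1 isT _ _ oU Uy.
    exfalso; case: n hn => [|n] hn.
      by rewrite muln0 /= in hn; exact: hn.2.
    have := hM _ hn.1; rewrite mulnS; lia.
  case: n hn => [|n] hn.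
    by rewrite muln0 /= in hn; case: hn.2.
  by exists (M.+1 * n.+1)%N; split => //; case: hn.
have [R hR] := bounded_ret _ _ hTinv cV back.
set Y := [set w | exists k, (k < R)%N /\ V (iter k Tinv w)].
have cY : clopen Y by exact: clopen_iterU.
have Yu : Y u.
  have [k [k0 kR _]] := hR u Vu.
  by exists 0%N; split => //; exact: leq_trans k0 kR.
have [Mu hMu] := fwd u hu.
have nY : ~ Y (iter (Mu + R) T u).
  move=> [k [kR hk]].
  rewrite (iterK3 _ _ hTK _ _ _ (leq_trans (ltnW kR) (leq_addl _ _))) in hk.
  have := hMu _ hk; lia.
apply: (noinv _ _ _ cY Yu nY) => w [k [kR hk]].
case: k kR hk => [|k] kR hk.
  have [j [j0 jR hj]] := hR w hk.
  exists j.-1; split; first lia.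
  by rewrite -iterSr prednK.
exists k; split; first lia.
by rewrite -iterSr.
Qed.


Lemma existsX u : u <> x0 -> (exists b0, B b0) -> exists i, closure G (u, i).
Proof.
move=> hu hb; apply: contrapT => /forallNP hn.
have hQ : forall i, exists P1, nbhs u P1 /\ forall w, P1 w -> ~ G (w, i).
  move=> i; have := hn i; rewrite /closure /= => /existsNP [Q /not_implyP [nQ hQ]].
  case: nQ => [[P1 P2] /= [nP1 nP2] sQ].
  exists P1; split => // w Pw Gw; apply: hQ; exists (w, i); split => //.
  by apply: sQ; split => //; exact: nbhs_singleton nP2.
have [P0 [n0 h0]] := hQ false; have [P1 [n1 h1]] := hQ true.
have [w [k [[P0w P1w] Bk]]] := dens _ hu hb _ (filterI n0 n1).
pose pr := [pred j | `[< B (iter j Tinv w) >]].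
have ex : exists j, pr j by exists k; apply/asboolP.
case: (ex_minnP ex) => j /asboolP Bj minj.
have Gw : G (w, odd j).
  exists j; split => //; split => // i ij Bi.
  by have := minj i (asboolT Bi); rewrite leqNgt ij.
by case: (odd j) Gw => Gw; [exact: h1 _ P1w Gw | exact: h0 _ P0w Gw].
Qed.

Lemma part1b : closure G `<=` fhat T A @` closure G.
Proof.
move=> [z b] Xp.
case: (AorB z) => hz.
  exists (Tinv z, ~~ b); last by rewrite /fhat /= hTinvK negbK (asboolT hz) andbT.
  move=> Q [[P1 P2] /= [nP1 nP2] sQ].
  set E := Tinv @^-1` P1° `&` A.
  have oE : open E.
    apply: openI; last exact: hA.1.
    by apply: (continuousP _).1 => //; exact: open_interior.
  have Ez : E z by split.
  have nbE : nbhs (z, b) (E `*` [set b]).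
    exists (E, [set b]) => //=; split; first exact: open_nbhs_nbhs.
    exact: discrete_set1.
  have [[w j] [[k [Bk [nk /= jk]]] [[Ew Aw] /= jb]]] := Xp _ nbE.
  case: k Bk nk jk => [|k] Bk nk jk; first by exfalso; exact: notAB Aw Bk.
  exists (Tinv w, ~~ b); split.
    exists k; split; first by rewrite -iterSr.
    split; first by move=> i ik; rewrite -iterSr; exact: nk.
    by rewrite /= -jb jk /= negbK.
  by apply: sQ; split; [exact: interior_subset Ew | exact: nbhs_singleton nP2].
have VS : B `<=` Sn 0 by move=> w Bw; split => // j.
have b0 : b = odd 0 := sheet 0 z b B hB.1 VS hz Xp.
have hTz : Tinv z <> x0.
  move=> e; apply: (notAB hx0); rewrite -hfix -e hTinvK; exact: hz.
have [i Xi] := existsX _ hTz (ex_intro _ z hz).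
exists (Tinv z, i) => //.
by rewrite /fhat /= hTinvK (asboolF (fun h => notAB h hz)) andbF b0.
Qed.

Lemma main_sec : let X := closure G in
  fhat T A @` X = X /\
  (forall (p : cantor_space * bool), X p -> p.1 <> x0 ->
   forall m : nat, (0 < m)%N ->
   forall y : int -> cantor_space * bool,
     (forall k, X (y k)) -> y 0%R = p -> (forall k, fhat T A (y k) = y (k + 1)%R) ->
     closure [set y (m%:Z * k)%R | k in [set: int]] = X).
Proof.
move=> X; split; first by apply/seteqP; split; [exact: part1a | exact: part1b].
exact: part2.
Qed.

End S.


Theorem lemma7p3
  (T Tinv : cantor_space -> cantor_space)
  (hTK : cancel T Tinv) (hTinvK : cancel Tinv T)
  (hT : continuous T) (hTinv : continuous Tinv)
  (x0 : cantor_space)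
  (hfix : T x0 = x0) (hfix_uniq : forall x, T x = x -> x = x0)
  (hmin : forall x, x <> x0 -> forall m : nat, (0 < m)%N ->
          closure [set iterz T Tinv (m%:Z * k)%R x | k in [set: int]] = [set: cantor_space])
  (A B : set cantor_space)
  (hA : clopen A) (hB : clopen B)
  (hAB : A `&` B = set0) (hAUB : A `|` B = [set: cantor_space])
  (hx0 : A x0) :
  let X := closure (graphN Tinv B) in
  fhat T A @` X = X /\
  (forall (p : cantor_space * bool), X p -> p.1 <> x0 ->
   forall m : nat, (0 < m)%N ->
   forall y : int -> cantor_space * bool,
     (forall k, X (y k)) -> y 0%R = p -> (forall k, fhat T A (y k) = y (k + 1)%R) ->
     closure [set y (m%:Z * k)%R | k in [set: int]] = X).
Proof.
exact: main_sec.
Qed.
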